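(* Let $\alpha>0$, $\beta>0$ and $\|a\|\ge\alpha$ be real numbers, $\kappa=\|a\|/\beta$, and let $\gamma_{\mathrm{opt}}(\alpha,\beta,\|a\|)$ be the smallest positive root of $\mu^3-(\|a\|^2+\beta^2)\mu+\alpha\beta^2=0$. Let \[ D_1=\begin{bmatrix}\frac1\alpha&\frac1\beta\left(1+\frac{\|a\|}{\alpha}\right)\\ \frac1\beta\left(1+\frac{\|a\|}{\alpha}\right)&\frac{\|a\|}{\beta^2}\left(1+\frac{\|a\|}{\alpha}\right)\end{bmatrix}. \] Then \[ \gamma_{\mathrm{opt}}(\alpha,\beta,\|a\|)>\frac{\alpha}{1+\kappa^2}>\frac{1}{\rho(D_1)}, \] where $\rho(D_1)$ denotes the spectral radius of $D_1$. *)

(* Defs.v *)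
From HB Require Import structures.
From mathcomp Require Import all_boot all_order all_algebra.
Set Implicit Arguments. Unset Strict Implicit. Unset Printing Implicit Defensive.
Import Order.TTheory GRing.Theory Num.Theory.
Local Open Scope ring_scope.

(* The cubic  mu^3 - (A^2 + beta^2) mu + alpha beta^2, with A = ||a||. *)
Definition opt_cubic (R : rcfType) (alpha beta A mu : R) : R :=
  mu ^+ 3 - (A ^+ 2 + beta ^+ 2) * mu + alpha * beta ^+ 2.

Definition is_gamma_opt (R : rcfType) (alpha beta A gamma : R) : Prop :=
  [/\ 0 < gamma, opt_cubic alpha beta A gamma = 0 &
      forall mu : R, 0 < mu -> opt_cubic alpha beta A mu = 0 -> gamma <= mu].

Definition D1 (R : rcfType) (alpha beta A : R) : 'M[R]_2 :=
  \matrix_(i < 2, j < 2)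
    if ((i : nat) == 0%N) && ((j : nat) == 0%N) then 1 / alpha
    else if ((i : nat) == 1%N) && ((j : nat) == 1%N)
         then A / beta ^+ 2 * (1 + A / alpha)
    else 1 / beta * (1 + A / alpha).

(* r is the spectral radius of M: the maximum modulus of the eigenvalues of M.
   (Eigenvalues are taken in R; for the symmetric real matrix D1 all
   eigenvalues are real.) *)
Definition is_spectral_radius (R : rcfType) (n : nat) (M : 'M[R]_n) (r : R) : Prop :=
  (exists2 l : R, eigenvalue M l & `|l| = r) /\
  (forall l : R, eigenvalue M l -> `|l| <= r).

(* Main.v *)
Require Import Defs.
From HB Require Import structures.
From mathcomp Require Import all_boot all_order all_algebra.
From mathcomp Require Import ring lra.
Import Order.TTheory GRing.Theory Num.Theory.
Local Open Scope ring_scope.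

Lemma eig2 (R : rcfType) (alpha beta A l : R) (hb : 0 < beta) (ha : 0 < alpha) (hA : 0 < A) :
  let p := 1 / alpha in let q := 1 / beta * (1 + A / alpha) in
  let s := A / beta ^+ 2 * (1 + A / alpha) in
  l ^+ 2 - (p + s) * l + (p * s - q ^+ 2) = 0 ->
  eigenvalue (D1 alpha beta A) l.
Proof.
move=> p q s hl; apply/eigenvalueP.
have hq : q != 0.
  by rewrite gt_eqF // /q mulr_gt0 // ?divr_gt0 // addr_gt0 // divr_gt0.
exists (\row_(j < 2) if (j : nat) == 0%N then q else l - p).
  apply/rowP => j; rewrite !mxE !big_ord_recl big_ord0 !mxE /=.
  case: j => [[|[|j]] Hj] //=.
  all: try (rewrite !mxE /=).
  - rewrite -/p -/q; ring.
  - rewrite -/s -/q -/p.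
    apply/eqP; rewrite -subr_eq0; apply/eqP.
    transitivity (- (l ^+ 2 - (p + s) * l + (p * s - q ^+ 2))); first ring.
    by rewrite hl oppr0.
apply/negP => /eqP /rowP /(_ ord0); rewrite !mxE /= => h.
by move: hq; rewrite h eqxx.
Qed.

Theorem mainTheorem3 (R : rcfType) (alpha beta A gamma r : R)
  (halpha : 0 < alpha) (hbeta : 0 < beta) (hA : alpha <= A)
  (hgamma : is_gamma_opt alpha beta A gamma)
  (hr : is_spectral_radius (D1 alpha beta A) r) :
  let kappa := A / beta in
  alpha / (1 + kappa ^+ 2) < gamma /\ 1 / r < alpha / (1 + kappa ^+ 2).
Proof.
move=> kappa.
have A0 : 0 < A by apply: lt_le_trans hA.
set S := A ^+ 2 + beta ^+ 2.
have S0 : 0 < S by rewrite /S addr_gt0 // exprn_gt0.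
have hm0 : alpha / (1 + kappa ^+ 2) = alpha * beta ^+ 2 / S.
  by rewrite /kappa /S; field; rewrite !gt_eqF // -/S.
rewrite hm0; set m0 := alpha * beta ^+ 2 / S.
have m00 : 0 < m0 by rewrite /m0 !divr_gt0 // ?mulr_gt0 // exprn_gt0.
have Sm0 : S * m0 = alpha * beta ^+ 2 by rewrite /m0; field; rewrite gt_eqF.
split.
  case: hgamma => g0 fg _; rewrite ltNge; apply/negP => hg.
  move: fg; rewrite /opt_cubic -/S => fg.
  have : S * gamma <= S * m0 by rewrite ler_pM2l.
  have : 0 < gamma ^+ 3 by rewrite exprn_gt0.
  nra.
set p := 1 / alpha; set q := 1 / beta * (1 + A / alpha).
set s := A / beta ^+ 2 * (1 + A / alpha).
set T := p + s; set Dl := p * s - q ^+ 2.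
have hD : Dl < 0.
  have -> : Dl = - ((1 + A / alpha) / beta ^+ 2).
    rewrite /Dl /p /q /s; field; rewrite !gt_eqF //.
  by rewrite oppr_lt0 divr_gt0 ?exprn_gt0 // addr_gt0 // divr_gt0.
set K := S / (alpha * beta ^+ 2).
have hK : K ^+ 2 - T * K + Dl < 0.
  have -> : K ^+ 2 - T * K + Dl =
     (- (S * A * alpha) - alpha * beta ^+ 2 * (alpha + A)) / (alpha ^+ 2 * beta ^+ 4).
    rewrite /K /T /Dl /p /q /s /S; field; rewrite !gt_eqF //.
  rewrite pmulr_llt0 ?invr_gt0 ?mulr_gt0 ?exprn_gt0 //.
  have h1 : 0 < S * A * alpha by rewrite !mulr_gt0.
  have h2 : 0 < alpha * beta ^+ 2 * (alpha + A) by rewrite !mulr_gt0 ?exprn_gt0 ?addr_gt0.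
  lra.
have K0 : 0 < K by rewrite /K divr_gt0 // mulr_gt0 // exprn_gt0.
have Km0 : m0 * K = 1 by rewrite /m0 /K; field; rewrite !gt_eqF // ?mulr_gt0 // exprn_gt0.
set disc := T ^+ 2 - 4 * Dl.
have disc0 : 0 <= disc by rewrite /disc; nra.
set sq := Num.sqrt disc.
have sq0 : 0 <= sq by rewrite sqrtr_ge0.
have sq2 : sq ^+ 2 = disc by rewrite sqr_sqrtr.
set lam := (T + sq) / 2.
have hlam : lam ^+ 2 - T * lam + Dl = 0.
  rewrite /lam; apply/eqP; rewrite -subr_eq0; apply/eqP.
  transitivity ((sq ^+ 2 - disc) / 4); first by rewrite /disc; field.
  by rewrite sq2 subrr mul0r.
have lamK : K < lam.
  rewrite ltNge; apply/negP => hKl.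
  have hT : T <= 2 * lam by rewrite /lam; lra.
  have : 0 <= (K - lam) * (K + lam - T) by apply: mulr_ge0; lra.
  nra.
have ev : eigenvalue (D1 alpha beta A) lam.
  apply: eig2 => //; rewrite -/p -/q -/s -/T -/Dl //.
case: hr => _ /(_ lam ev); rewrite ger0_norm; last by lra.
move=> hlr.
have r0 : 0 < r by lra.
rewrite ltr_pdivrMr //.
have : 0 < m0 * (r - K) by rewrite mulr_gt0 // subr_gt0; lra.
rewrite mulrBr Km0 subr_gt0 //.
Qed.
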